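(* Let $A\subseteq\mathbb{N}$, let $d,r\in\mathbb{N}$, let $B=\{a/d : a\in A\}\cap\mathbb{N}$ and let $C=\{a\in A : a\equiv 0 \pmod d\}$. If $A$ is $rd$-accessible, then (i) $B$ is $r$-accessible, and (ii) $C$ is $r$-accessible.
   Context: An $r$-coloring of a set $A$ is a function $\chi:A\to\{1,\dots,r\}$. For $D\subseteq\mathbb{N}=\{1,2,3,\dots\}$, a $k$-term $D$-diffsequence is a sequence of integers $x_1,\dots,x_k$ with $x_{i+1}-x_i\in D$ for all $1\le i\le k-1$. A set $D\subseteq\mathbb{N}$ is $r$-accessible if for every $r$-coloring of $\mathbb{N}$ and every $k\ge1$ there is a monochromatic $k$-term $D$-diffsequence in $\mathbb{N}$. *)

(* Defs.v *)
From mathcomp Require Import all_boot.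
Set Implicit Arguments. Unset Strict Implicit. Unset Printing Implicit Defensive.

(* Subsets of N = {1,2,3,...} are represented as predicates on nat;
   positivity is imposed separately where needed. *)

Definition diffseq (D : nat -> Prop) (x : seq nat) : Prop :=
  forall i, i.+1 < size x ->
    exists2 delta, D delta & nth 0 x i.+1 = nth 0 x i + delta.

(* An r-coloring of N is chi : nat -> 'I_r (the value at 0 is irrelevant,
   since the sequences below live in N = {1,2,...}). *)
Definition accessible (r : nat) (D : nat -> Prop) : Prop :=
  forall (chi : nat -> 'I_r) (k : nat), 1 <= k ->
    exists x : seq nat,
      [/\ size x = k,
          (forall i, i < k -> 0 < nth 0 x i),
          diffseq D x &
          (forall i, i < k -> chi (nth 0 x i) = chi (nth 0 x 0))].

Definition divset (A : nat -> Prop) (d : nat) : nat -> Prop :=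
  fun b => 0 < b /\ A (b * d).

Definition multset (A : nat -> Prop) (d : nat) : nat -> Prop :=
  fun a => A a /\ d %| a.

(* Main.v *)
Require Import Defs.
From mathcomp Require Import all_boot.

Lemma enc_lt (r d : nat) (c : 'I_r) (s : nat) : 0 < d -> c * d + s %% d < r * d.
Proof.
move=> d0; have := ltn_ord c => cr.
have : s %% d < d by rewrite ltn_mod.
have : c.+1 * d <= r * d by rewrite leq_mul2r cr orbT.
rewrite mulSn => h1 h2; rewrite addnC in h1.
by apply: leq_trans h1; rewrite ltn_add2l.
Qed.

Lemma key (A : nat -> Prop) (d r : nat) (g : nat -> 'I_r) (k : nat) :
  0 < d -> accessible (r * d) A -> 1 <= k ->
  exists x : seq nat,
    [/\ size x = k, (forall i, i < k -> 0 < nth 0 x i),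
     (forall i, i.+1 < size x -> exists2 delta, A delta /\ d %| delta &
         nth 0 x i.+1 = nth 0 x i + delta) &
     (forall i, i < k -> g (nth 0 x i) = g (nth 0 x 0))].
Proof.
move=> d0 acc k1.
pose col n : 'I_(r * d) := Ordinal (@enc_lt r d (g n) n d0).
have [x [sx pos df cl]] := acc col k k1.
have hc : forall i, i < k -> g (nth 0 x i) = g (nth 0 x 0) /\
    nth 0 x i %% d = nth 0 x 0 %% d.
  move=> i ik; have := cl i ik; move/(congr1 val) => /= e.
  have e1 := congr1 (fun t => t %/ d) e; have e2 := congr1 (fun t => t %% d) e.
  rewrite /= !divnMDl // !divn_small ?ltn_mod // !addn0 in e1.
  rewrite /= !modnMDl !modn_mod in e2.
  by split => //; apply: val_inj.
exists x; split => //; last by move=> i ik; case: (hc i ik).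
move=> i ilt; have [delta Ad e] := df i ilt.
exists delta => //; split => //.
rewrite sx in ilt.
have [_ m1] := hc i.+1 ilt; have [_ m2] := hc i (ltnW ilt).
rewrite e -m2 -[X in _ = X %% d]addn0 in m1.
rewrite /dvdn; move: m1; move/eqP; rewrite eqn_modDl mod0n => /eqP ->; done.
Qed.

Theorem mainTheorem3 (A : nat -> Prop) (d r : nat) :
  (forall a, A a -> 0 < a) -> 0 < d -> 0 < r ->
  accessible (r * d) A ->
  accessible r (divset A d) /\ accessible r (multset A d).
Proof.
move=> Apos d0 r0 acc; split; move=> chi k k1.
- have [x [sx pos df cl]] := @key A d r (fun n => chi (n %/ d).+1) k d0 acc k1.
  exists (map (fun n => (n %/ d).+1) x); split.
  + by rewrite size_map.
  + by move=> i ik; rewrite (nth_map 0) ?sx.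
  + move=> i; rewrite size_map => ilt.
    have [delta [Ad dd] e] := df i ilt.
    have [m em] := dvdnP dd.
    exists m.
      split; last by rewrite -em.
      have := Apos _ Ad; rewrite em; by case: m {em} => //.
    rewrite !(nth_map 0) ?(ltnW ilt) // e em.
    by rewrite addnC divnMDl // addSn addnC.
  + move=> i ik; rewrite !(nth_map 0) ?sx //; try exact: cl.
- have [x [sx pos df cl]] := @key A d r chi k d0 acc k1.
  exists x; split.
  all: try done.
Qed.
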